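(* Let $K$ be a field and $(Q,f,g,c,W)$ as in the setting below, and assume that either $Q$ satisfies $(\star)$, or $Q$ satisfies $(\diamond)$ and $\prod_{\alpha\in\Omega}c_\alpha\neq1$ for $\Omega$ a set of representatives of the $g$-orbits. Then the potential $W$ is not rigid.
   Context: Setting: $Q$ is a finite quiver with arrow set $Q_1$, connected, without loops or $2$-cycles, every vertex being the source of exactly two arrows and the target of exactly two arrows, equipped with bijections $f,g:Q_1\to Q_1$ such that for each $\alpha$, $\{f(\alpha),g(\alpha)\}$ is the set of the two arrows starting at the target of $\alpha$, and $f^3=\mathrm{id}$. $n_\alpha$ is the size of the $g$-orbit of $\alpha$. $c:Q_1\to K^\times$ is constant on $g$-orbits. Paths compose left to right. $W=\sum_\alpha \alpha\cdot f(\alpha)\cdot f^2(\alpha)-\sum_\beta c_\beta\,\beta\cdot g(\beta)\cdots g^{n_\beta-1}(\beta)$ (sums over representatives of $f$-orbits, resp. $g$-orbits) in the completed path algebra $\widehat{KQ}$. The Jacobian ideal $J(W)$ is the closure of the two-sided ideal generated by the cyclic derivatives of $W$. $W$ is rigid if every potential on $Q$ is cyclically equivalent to an element of $J(W)$. $(\star)$: for every $\alpha$, $n_\alpha\ge4$ or $n_{f(\alpha)}\ge4$. $(\diamond)$: $n_\alpha=3$ for all $\alpha$. *)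

(* Defs.v *)
From mathcomp Require Import all_boot all_order all_algebra.
Set Implicit Arguments. Unset Strict Implicit. Unset Printing Implicit Defensive.
Import GRing.Theory.
Local Open Scope ring_scope.

(* Elements of the completed path algebra \hat{KQ} are arbitrary (possibly
   infinite) K-linear combinations of paths.  A path is encoded as a pair
   (v, p) : V * seq A  (start vertex v, arrows p composed LEFT TO RIGHT);
   (v, [::]) is the trivial path e_v.  A series is a function giving the
   coefficient of each path; only valid paths matter (all operations below
   produce series vanishing on invalid pairs). *)

Section PathAlgebra.
Variables (K : fieldType) (V A : finType) (s t : A -> V).

Definition series := V -> seq A -> K.

Fixpoint valid_from (v : V) (p : seq A) : bool :=
  match p with
  | [::] => true
  | a :: p' => (s a == v) && valid_from (t a) p'
  end.

Definition end_of (v : V) (p : seq A) : V := last v (map t p).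

Definition is_cycle (v : V) (p : seq A) : bool :=
  (p != [::]) && valid_from v p && (end_of v p == v).

Definition path_series (v : V) (p : seq A) : series :=
  fun w q => if (w == v) && (q == p) then 1 else 0.

Definition smul (x y : series) : series :=
  fun v p => if valid_from v p then
     \sum_(i < (size p).+1) x v (take i p) * y (end_of v (take i p)) (drop i p)
   else 0.

(* cyclic derivative  d_xi (a_1 ... a_d) = sum_{k : a_k = xi} a_{k+1}...a_d a_1...a_{k-1},
   extended (coefficientwise) to series *)
Definition dcyc (xi : A) (W : series) : series :=
  fun w r => if valid_from w (rcons r xi) && (end_of w (rcons r xi) == w) then
     \sum_(k < (size r).+1)
        W (s (head xi (rotr k.+1 (rcons r xi)))) (rotr k.+1 (rcons r xi))
   else 0.

(* closure in the (path-length) adic topology of a set S of series *)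
Definition in_closure (S : series -> Prop) (x : series) : Prop :=
  forall n : nat, exists y, S y /\ forall v p, (size p < n)%N -> x v p = y v p.

Definition in_jac_ideal (W : series) (x : series) : Prop :=
  exists l : seq (series * A * series),
    forall v p, x v p = \sum_(e <- l) smul (smul e.1.1 (dcyc e.1.2 W)) e.2 v p.

Definition jacobian_ideal (W : series) : series -> Prop :=
  in_closure (in_jac_ideal W).

Definition potential (P : series) : Prop :=
  forall v p, P v p != 0 -> is_cycle v p.

Definition rot1_start (v : V) (p : seq A) : V :=
  match p with a :: _ => t a | [::] => v end.

Definition in_cyc_comm_span (x : series) : Prop :=
  exists l : seq (K * (V * seq A)),
    (forall e, e \in l -> is_cycle e.2.1 e.2.2) /\
    forall v p, x v p = \sum_(e <- l)
       e.1 * (path_series e.2.1 e.2.2 v p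
              - path_series (rot1_start e.2.1 e.2.2) (rot 1 e.2.2) v p).

Definition cyc_equiv (P Q : series) : Prop :=
  in_closure in_cyc_comm_span (fun v p => P v p - Q v p).

Definition rigid (W : series) : Prop :=
  forall P, potential P -> exists y, jacobian_ideal W y /\ cyc_equiv P y.

End PathAlgebra.

Section Setting.
Variables (V A : finType) (s t : A -> V).

Definition underlying_adj : rel V :=
  fun x y => [exists a, ((s a == x) && (t a == y)) || ((s a == y) && (t a == x))].

Definition quiver_setting (f g : A -> A) : Prop :=
  ((0 < #|V|)%N /\ (forall u v, connect underlying_adj u v)) /\
  (forall a, s a != t a) /\
  (forall a b, s a = t b -> t a = s b -> False) /\
  (forall v, #|[set a | s a == v]| = 2%N /\ #|[set a | t a == v]| = 2%N) /\
  (bijective f /\ bijective g) /\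
  (forall a, [set f a; g a] = [set b | s b == t a]) /\
  (forall a, f (f (f a)) = a).

Definition orbit_reps (h : A -> A) (R : {set A}) : Prop :=
  forall a, #|[set r in R | fconnect h a r]| = 1%N.

(* the potential W, for chosen representatives Rf of f-orbits and Rg of g-orbits;
   n_b = order g b is the size of the g-orbit of b, and
   traject g b (order g b) = [:: b; g b; ...; g^(n_b - 1) b] *)
Definition W_pot (K : fieldType) (f g : A -> A) (c : A -> K) (Rf Rg : {set A})
  : series K V A :=
  fun v p => \sum_(a in Rf) @path_series K V A (s a) [:: a; f a; f (f a)] v p
           - \sum_(b in Rg) c b * @path_series K V A (s b) (traject g b (order g b)) v p.

End Setting.

(* Main.v *)
Require Import Defs.
From mathcomp Require Import all_boot all_order all_algebra zify ring.
Set Implicit Arguments. Unset Strict Implicit. Unset Printing Implicit Defensive.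
Import GRing.Theory.
Local Open Scope ring_scope.

Lemma sum_ord1 (K : fieldType) m k (G : nat -> K) :
  \sum_(j < m) ((j == k :> nat)%:R * G j) = (k < m)%N%:R * G k.
Proof.
case: (ltnP k m) => km; last first.
  rewrite mul0r big1 // => j _; case: eqP => [e|]; last by rewrite mul0r.
  by move: (ltn_ord j); rewrite e ltnNge km.
rewrite mul1r (bigD1 (Ordinal km)) //= eqxx mul1r big1 ?addr0 // => j /negbTE nj.
case: eqP => [e|]; last by rewrite mul0r.
have E : j = Ordinal km by apply: val_inj.
by rewrite E eqxx in nj.
Qed.

Lemma dsum1 (K : fieldType) n i0 j0 (G : nat -> nat -> K) :
  (j0 <= i0)%N -> (i0 <= n)%N ->
  \sum_(i < n.+1) \sum_(j < i.+1) (((i == i0 :> nat) && (j == j0 :> nat))%:R * G i j)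
  = G i0 j0.
Proof.
move=> ji io.
transitivity (\sum_(i < n.+1) ((i == i0 :> nat)%:R * G i j0)).
  apply: eq_bigr => i _.
  case: (eqVneq (i : nat) i0) => [e|ne].
    have ei : (i == i0 :> nat) by apply/eqP.
    under eq_bigr => j _ do rewrite andTb.
    rewrite (@sum_ord1 _ _ _ (fun j => G i j)).
    have -> : (j0 < i.+1)%N by rewrite ltnS e.
    by [].
  by rewrite big1 ?mul0r // => j _; rewrite mul0r.
by rewrite (@sum_ord1 _ _ _ (fun i => G i j0)) ltnS io mul1r.
Qed.


Section Orb.
Variables (V A : finType) (s t : A -> V) (h : A -> A).
Hypothesis injh : injective h.
Hypothesis sh : forall a, s (h a) = t a.

Notation orb a := (traject h a (order h a)).

Lemma order_h x : order h (h x) = order h x.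
Proof. exact: order_id_cycle (cycle_orbit injh x). Qed.

Lemma order_iter k x : order h (iter k h x) = order h x.
Proof. by elim: k => //= k IH; rewrite order_h. Qed.

Lemma order_conn x y : fconnect h x y -> order h y = order h x.
Proof. by move/iter_findex => <-; rewrite order_iter. Qed.

Lemma iter_order_h x : iter (order h x) h x = x.
Proof. exact: iter_order injh x. Qed.

Lemma valid_traject x m : valid_from s t (s x) (traject h x m).
Proof. by elim: m x => //= m IH x; rewrite eqxx /= -sh IH. Qed.

Lemma end_traject x m : end_of t (s x) (traject h x m) = s (iter m h x).
Proof.
elim: m x => // m IH x; rewrite /end_of /= -sh.
have := IH (h x); rewrite /end_of => ->; by rewrite -iterSr.
Qed.

Lemma drop_traject i n x : (i <= n)%N ->
  drop i (traject h x n) = traject h (iter i h x) (n - i).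
Proof.
move=> le; by rewrite -{1}(subnKC le) trajectD drop_size_cat // size_traject.
Qed.

Lemma orb_cons x : orb x = x :: traject h (h x) (order h x).-1.
Proof. by rewrite -{1}(orderSpred h x). Qed.

Lemma rot_orb k x : (k <= order h x)%N -> rot k (orb x) = orb (iter k h x).
Proof.
move=> le; rewrite order_iter /rot drop_traject // take_traject //.
rewrite -[in RHS](subnK le) trajectD; congr (_ ++ _).
by rewrite -iterD subnK // iter_order_h.
Qed.

Lemma rot1_orb x : rot 1 (orb x) = orb (h x).
Proof. by rewrite rot_orb // order_gt0. Qed.

Lemma count_iter x y :
  \sum_(k < order h y) ((iter k h x == y) : nat) = fconnect h y x.
Proof.
case: (boolP (fconnect h y x)) => [con|ncon].
  have con' : fconnect h x y by rewrite fconnect_sym.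
  rewrite (order_conn con') (bigD1 (Ordinal (findex_max con'))) //=.
  rewrite iter_findex // eqxx big1 // => k /eqP nk.
  case: eqP => // e; case: nk; apply: val_inj => /=.
  by rewrite -e findex_iter // (order_conn con') .
rewrite big1 // => k _; case: eqP => // e.
by move: ncon; rewrite fconnect_sym // -e fconnect_iter.
Qed.

Lemma w_iter (K : fieldType) (w : A -> K) (hw : forall a, w (h a) = w a) k x :
  w (iter k h x) = w x.
Proof. by elim: k => //= k IH; rewrite hw. Qed.

Lemma sum_reps (K : fieldType) (R : {set A}) (w : A -> K)
  (hw : forall a, w (h a) = w a) (reps : orbit_reps h R) xi :
  \sum_(a in R) w a * (fconnect h xi a)%:R = w xi.
Proof.
transitivity (\sum_(a in R) w xi * (fconnect h xi a)%:R).
  apply: eq_bigr => a _; case: (boolP (fconnect h xi a)) => [con|]; last by rewrite !mulr0.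
  by rewrite -(iter_findex con) w_iter.
rewrite -mulr_sumr -natr_sum.
have -> : (\sum_(a in R) (fconnect h xi a : nat))%N = #|[set r in R | fconnect h xi r]|.
  rewrite -sum1_card [RHS]big_mkcond [LHS]big_mkcond; apply: eq_bigr => a _.
  by rewrite !inE; case: (a \in R); case: (fconnect h xi a).
by rewrite reps mulr1.
Qed.

Lemma rot_count r xi a k : (k < (size r).+1)%N ->
  (rotr k.+1 (rcons r xi) == orb a) = (xi :: r == orb xi) && (iter k h a == xi).
Proof.
move=> lk.
have E : (rotr k.+1 (rcons r xi) == orb a) = (rcons r xi == rot k.+1 (orb a)).
  apply/eqP/eqP => [<-|->]; [by rewrite rotrK | by rewrite rotK].
rewrite E.
case: (eqVneq (size r).+1 (order h a)) => [es|ns]; last first.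
  case: eqP => [e|_]; first by case/negP: ns; rewrite -(size_rcons r xi) e size_rot size_traject.
  case: eqP => // e2; case: eqP => // ie.
  move: e2 ns; rewrite -ie order_iter => /(congr1 size); rewrite /= size_traject => ->.
  by rewrite eqxx.
rewrite (@rotS _ k (orb a)); last by rewrite size_traject -es.
rewrite -rot1_cons.
have -> : (rot 1 (xi :: r) == rot 1 (rot k (orb a))) = (xi :: r == rot k (orb a)).
  by apply/eqP/eqP => [/rot_inj|->].
rewrite rot_orb -?es 1?ltnW //.
case: (eqVneq (iter k h a) xi) => [->|ne]; first by rewrite andbT.
rewrite andbF; apply/eqP => e; case/negP: ne; move: e; rewrite orb_cons.
by case=> ->.
Qed.

Lemma sum_rot (K : fieldType) (R : {set A}) (w : A -> K)
  (hw : forall a, w (h a) = w a) (reps : orbit_reps h R) r xi :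
  \sum_(k < (size r).+1) \sum_(a in R) w a * (rotr k.+1 (rcons r xi) == orb a)%:R
  = (xi :: r == orb xi)%:R * w xi.
Proof.
under eq_bigr => k _ do under eq_bigr => a _ do rewrite rot_count //.
case: (boolP (xi :: r == orb xi)) => [/eqP e|_]; last first.
  by rewrite mul0r big1 // => k _; rewrite big1 // => a _; rewrite mulr0.
have es : (size r).+1 = order h xi by have := congr1 size e; rewrite size_traject.
rewrite mul1r exchange_big /= -(sum_reps hw reps xi); apply: eq_bigr => a _.
by rewrite -mulr_sumr es -(count_iter a xi) natr_sum.
Qed.

Lemma cond_eq x xi (o2 : (1 < order h xi)%N) i j :
  (j <= i)%N -> (i <= order h x)%N ->
  (((i - j)%N == (order h xi).-1) && (iter j h x == h xi)) =
  ((i == (order h x).-1) && (j == 0%N) && (x == h xi)) ||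
  ((i == order h x) && (j == 1%N) && (x == xi)).
Proof.
move=> ji io.
case: (boolP (iter j h x == h xi)) => [/eqP e|ne]; last first.
  rewrite andbF; case: j ji ne => [|[|j]] ji ne /=.
  - by rewrite (negbTE ne) !andbF.
  - case: (eqVneq x xi) => [ex|nx]; first by move: ne; rewrite ex /= eqxx.
    by rewrite !andbF.
  - by rewrite !andbF.
have ox : order h x = order h xi.
  have : order h (iter j h x) = order h (h xi) by rewrite e.
  by rewrite order_iter order_h.
rewrite andbT ox.
case: j ji e => [|[|j]] ji /= e.
- by rewrite subn0 e !eqxx /= !andbT !andbF orbF.
- move: e => /injh ->; rewrite !eqxx /= !andbT !andbF /=.
  move: io o2; rewrite ox; case: (order h xi) => [|n] io o2 /=; first by case: i ji io.
  by rewrite subn1 -eqSS prednK // (leq_trans _ ji).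
- rewrite !andbF; apply/negP => /eqP e2.
  move: e2 io o2; rewrite ox -subn1; lia.
Qed.

Lemma smul2_traj (K : fieldType) (u d v : series K V A) x n :
  smul s t (smul s t u d) v (s x) (traject h x n) =
  \sum_(i < n.+1) (\sum_(j < i.+1) u (s x) (traject h x j) *
      d (s (iter j h x)) (traject h (iter j h x) (i - j))) *
    v (s (iter i h x)) (traject h (iter i h x) (n - i)).
Proof.
rewrite /smul valid_traject size_traject; apply: eq_bigr => i _.
have hi : (i <= n)%N by rewrite -ltnS.
rewrite take_traject // valid_traject end_traject drop_traject // size_traject.
congr (_ * _); apply: eq_bigr => j _.
have hj : (j <= i)%N by rewrite -ltnS.
by rewrite take_traject // end_traject drop_traject.
Qed.


Lemma z_gen (K : fieldType) (u d v : series K V A) (w : K) xi x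
  (o2 : (1 < order h xi)%N)
  (hd : forall y m, d (s y) (traject h y m) =
          w * ((m == (order h xi).-1) && (y == h xi))%:R) :
  smul s t (smul s t u d) v (s x) (orb x) =
  w * ((x == h xi)%:R * (u (s x) [::] *
         v (s (iter (order h x).-1 h x)) [:: iter (order h x).-1 h x])
     + (x == xi)%:R * (u (s x) [:: x] * v (s (iter (order h x) h x)) [::])).
Proof.
rewrite smul2_traj.
set n := order h x.
have n0 : (0 < n)%N by apply: order_gt0.
pose G1 i j := (x == h xi)%:R * (w * (u (s x) (traject h x j) *
      v (s (iter i h x)) (traject h (iter i h x) (n - i)))).
pose G2 i j := (x == xi)%:R * (w * (u (s x) (traject h x j) *
      v (s (iter i h x)) (traject h (iter i h x) (n - i)))).
transitivity (\sum_(i < n.+1) \sum_(j < i.+1)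
   ((((i == n.-1 :> nat) && (j == 0%N :> nat))%:R * G1 i j) +
    (((i == n :> nat) && (j == 1%N :> nat))%:R * G2 i j))).
  apply: eq_bigr => i _; rewrite mulr_suml; apply: eq_bigr => j _.
  have hj : (j <= i)%N by rewrite -ltnS.
  have hi : (i <= n)%N by rewrite -ltnS.
  rewrite hd (cond_eq o2 hj hi) /G1 /G2.
  case: (j : nat) hj => [|[|j']] _ /=; rewrite ?andbF ?andbT ?orbF /=;
    case: (i == _ :> nat); case: (x == _); rewrite /= ?mul0r ?mulr0 ?add0r ?addr0 ?mul1r ?mulr1 //; ring.
under eq_bigr => i _ do rewrite big_split /=.
rewrite big_split /= !dsum1 // ?leq_pred //.
rewrite /G1 /G2 subnn /=.
have -> : (n - n.-1 = 1)%N by rewrite -subn1 subKn.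
by rewrite /= mulrDr !mulrA ![_ * w]mulrC.
Qed.

Lemma ps_rot (K : fieldType) (w : A -> K) (hw : forall a, w (h a) = w a) v p
  (cyc : is_cycle s t v p) :
  \sum_a w a * path_series K v p (s a) (orb a) =
  \sum_a w a * path_series K (rot1_start t v p) (rot 1 p) (s a) (orb a).
Proof.
rewrite [RHS](reindex_inj injh) /=; apply: eq_bigr => a _; rewrite hw; congr (_ * _).
rewrite /path_series -rot1_orb (inj_eq rot_inj).
case: (eqVneq (orb a) p) => [e|]; last by rewrite !andbF.
rewrite !andbT.
move: cyc; rewrite -e orb_cons /is_cycle /= => /andP[/andP[-> _] _].
by rewrite sh eqxx.
Qed.
End Orb.



Section Main.
Variables (K : fieldType) (V A : finType) (s t : A -> V) (f g : A -> A) (c : A -> K)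
  (Rf Rg : {set A}).
Hypothesis injf : injective f.
Hypothesis injg : injective g.
Hypothesis sf : forall a, s (f a) = t a.
Hypothesis sg : forall a, s (g a) = t a.
Hypothesis fneg : forall a, f a != g a.
Hypothesis noloop : forall a, s a != t a.
Hypothesis no2 : forall a b, s a = t b -> t a = s b -> False.
Hypothesis f3 : forall a, f (f (f a)) = a.
Hypothesis cg : forall a, c (g a) = c a.
Hypothesis cnz : forall a, c a != 0.
Hypothesis repf : orbit_reps f Rf.
Hypothesis repg : orbit_reps g Rg.

Notation orbf a := (traject f a (order f a)).
Notation orbg a := (traject g a (order g a)).
Notation W := (W_pot s f g c Rf Rg).

Lemma fa_neq a : f a != a.
Proof. by apply/eqP => e; case/eqP: (noloop a); rewrite -{1}e sf. Qed.

Lemma order_f a : order f a = 3%N.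
Proof.
apply: (@order_cycle _ f [:: a; f a; f (f a)]) => //=; last by rewrite inE eqxx.
  by rewrite !eqxx f3 eqxx.
have h1 : a != f a by rewrite eq_sym fa_neq.
have h2 : a != f (f a).
  by apply/eqP => e; case/eqP: (fa_neq a); rewrite {1}e f3.
by rewrite !inE negb_or andbT (inj_eq injf) h1 h2.
Qed.

Lemma orbfE a : orbf a = [:: a; f a; f (f a)].
Proof. by rewrite order_f. Qed.

Lemma order_g a : (3 <= order g a)%N.
Proof.
have := iter_order injg a; have := order_gt0 g a.
case: (order g a) => [//|[|[|n]]] // _ /=.
  by move=> e; case/eqP: (noloop a); rewrite -{1}e sg.
move=> e; exfalso.
have e1 : s a = t (g a) by rewrite -{1}e sg.
have e2 : t a = s (g a) by rewrite sg.
exact: (no2 e1 e2).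
Qed.

Lemma ps_eval (h : A -> A) a xi p :
  path_series K (s a) (traject h a (order h a)) (s (head xi p)) p
  = (p == traject h a (order h a))%:R.
Proof.
rewrite /path_series; case: (eqVneq p (traject h a (order h a))) => [->|ne].
  by rewrite {1}(orb_cons h a) /= eqxx.
by rewrite andbF.
Qed.

Lemma W_eval xi p : W (s (head xi p)) p =
  \sum_(a in Rf) (p == orbf a)%:R - \sum_(b in Rg) c b * (p == orbg b)%:R.
Proof.
rewrite /W_pot; congr (_ - _).
  by apply: eq_bigr => a _; rewrite -orbfE ps_eval.
by apply: eq_bigr => b _; rewrite ps_eval.
Qed.

Lemma dcyc_eval xi y r : dcyc s t xi W y r =
  if valid_from s t y (rcons r xi) && (end_of t y (rcons r xi) == y)
  then (xi :: r == orbf xi)%:R - c xi * (xi :: r == orbg xi)%:R else 0.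
Proof.
rewrite /dcyc; case: ifP => // _.
under eq_bigr => k _ do rewrite W_eval.
rewrite sumrB; congr (_ - _); last by rewrite (sum_rot injg cg repg) mulrC.
have := sum_rot injf (w := fun _ => (1 : K)) (fun _ => erefl) repf r xi.
by rewrite mulr1 => <-; apply: eq_bigr => k _; apply: eq_bigr => a _; rewrite mul1r.
Qed.


Lemma orbg_cons a : orbg a = a :: g a :: traject g (g (g a)) (order g a).-2.
Proof. by have := order_g a; case: (order g a) => [|[|[|n]]]. Qed.

Lemma seq_ff xi y m : (xi :: traject f y m == orbf xi) = (m == 2%N) && (y == f xi).
Proof.
rewrite orbfE eqseq_cons eqxx /=.
apply/eqP/andP => [e|[/eqP-> /eqP->]] //.
have em := congr1 size e; rewrite size_traject in em; subst m.
by case: e => ->.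
Qed.

Lemma seq_fg xi y m : (xi :: traject f y m == orbg xi) = false.
Proof.
rewrite orbg_cons eqseq_cons eqxx /=.
apply/eqP => e; have em := congr1 size e; rewrite /= !size_traject in em.
move: e; have := order_g xi; rewrite em.
case: (order g xi) => [|[|[|n]]] //= _ [e1 e2].
by move: (fneg y); rewrite e2 e1 eqxx.
Qed.

Lemma seq_gf xi y m : (xi :: traject g y m == orbf xi) = false.
Proof.
rewrite orbfE eqseq_cons eqxx /=.
apply/eqP => e; have em := congr1 size e; rewrite /= !size_traject in em.
move: e; rewrite em /= => -[e1 e2].
by move: (fneg y); rewrite e2 {1}e1 eqxx.
Qed.

Lemma seq_gg xi y m : (xi :: traject g y m == orbg xi) = (m == (order g xi).-1) && (y == g xi).
Proof.
rewrite (orb_cons g xi) eqseq_cons eqxx /=.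
apply/eqP/andP => [e|[/eqP-> /eqP->]] //.
have em := congr1 size e; rewrite !size_traject in em.
split; first by rewrite em.
move: e; rewrite em; have := order_g xi.
by case: (order g xi) => [|[|n]] //= _ [->].
Qed.

Lemma d_f xi y m :
  dcyc s t xi W (s y) (traject f y m) = ((m == 2%N) && (y == f xi))%:R.
Proof.
rewrite dcyc_eval seq_ff seq_fg mulr0 subr0.
case: (boolP ((m == 2%N) && (y == f xi))) => [/andP[/eqP -> /eqP ->]|]; last by case: ifP.
have -> : rcons (traject f (f xi) 2) xi = traject f (f xi) 3 by rewrite /= f3.
by rewrite valid_traject // end_traject // /= f3 eqxx.
Qed.

Lemma d_g xi y m :
  dcyc s t xi W (s y) (traject g y m) = - c xi * ((m == (order g xi).-1) && (y == g xi))%:R.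
Proof.
rewrite dcyc_eval seq_gg seq_gf sub0r mulNr.
case: (boolP ((m == (order g xi).-1) && (y == g xi))) => [/andP[/eqP -> /eqP ->]|]; last by case: ifP; rewrite ?mulr0 ?oppr0.
have -> : rcons (traject g (g xi) (order g xi).-1) xi = traject g (g xi) (order g xi).
  rewrite -{2}(orderSpred g xi) trajectSr; congr rcons.
  by rewrite -iterSr orderSpred (iter_order injg).
by rewrite valid_traject // end_traject // -iterSr iterS (iter_order injg) eqxx.
Qed.


Definition lam (x : series K V A) : K :=
  \sum_a x (s a) (orbf a) + \sum_b (c b)^-1 * x (s b) (orbg b).

Lemma sum_pick (G : A -> K) k : \sum_a (a == k)%:R * G a = G k.
Proof.
rewrite (bigD1 k) //= eqxx mul1r big1 ?addr0 // => a /negbTE ->.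
by rewrite mul0r.
Qed.

Lemma iter_pred_h (h : A -> A) (injh : injective h) x :
  iter (order h (h x)).-1 h (h x) = x.
Proof.
rewrite (order_h injh) -iterSr orderSpred.
exact: iter_order injh x.
Qed.

Lemma lam_ideal u v xi : lam (smul s t (smul s t u (dcyc s t xi W)) v) = 0.
Proof.
have hdf : forall y m, dcyc s t xi W (s y) (traject f y m) =
    1 * ((m == (order f xi).-1) && (y == f xi))%:R.
  by move=> y m; rewrite d_f order_f mul1r.
have hdg : forall y m, dcyc s t xi W (s y) (traject g y m) =
    - c xi * ((m == (order g xi).-1) && (y == g xi))%:R.
  by move=> y m; rewrite d_g.
have of2 : (1 < order f xi)%N by rewrite order_f.
have og2 : (1 < order g xi)%N by apply: leq_trans (order_g xi).
rewrite /lam.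
under eq_bigr => a _ do rewrite (z_gen injf sf u v _ of2 hdf) mul1r.
under [X in _ + X]eq_bigr => b _ do rewrite (z_gen injg sg u v _ og2 hdg).
rewrite [X in X + _]big_split /= !sum_pick.
rewrite [X in _ + X](eq_bigr (fun b => (b == g xi)%:R * ((c b)^-1 * - c xi *
       (u (s b) [::] * v (s (iter (order g b).-1 g b)) [:: iter (order g b).-1 g b]))
     + (b == xi)%:R * ((c b)^-1 * - c xi * (u (s b) [:: b] * v (s (iter (order g b) g b)) [::]))));
  last by move=> b _; ring.
rewrite big_split /= !sum_pick cg !iter_pred_h // (iter_order injg) (iter_order injf).
rewrite sf sg mulrN mulVf // !mulN1r.
by rewrite addrC !addrA addrK subrr.
Qed.

Lemma lam_sum (T : Type) (l : seq T) (F : T -> series K V A) :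
  lam (fun v p => \sum_(e <- l) F e v p) = \sum_(e <- l) lam (F e).
Proof.
rewrite /lam big_split /= exchange_big /=; congr (_ + _).
rewrite exchange_big /=; apply: eq_bigr => b _.
by rewrite mulr_sumr.
Qed.

Lemma lam_scale k (x : series K V A) : lam (fun v p => k * x v p) = k * lam x.
Proof.
rewrite /lam mulrDr !mulr_sumr; congr (_ + _); apply: eq_bigr => b _.
by rewrite mulrCA.
Qed.

Lemma lam_sub (x y : series K V A) :
  lam (fun v p => x v p - y v p) = lam x - lam y.
Proof.
rewrite /lam !sumrB; under [X in _ + X]eq_bigr => b _ do rewrite mulrBr.
by rewrite sumrB opprD addrACA.
Qed.

Lemma lam_ext (x y : series K V A) :
  (forall v p, (size p < #|A|.+4)%N -> x v p = y v p) -> lam x = lam y.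
Proof.
move=> E; rewrite /lam; congr (_ + _); apply: eq_bigr => a _.
  by rewrite E // size_traject order_f.
rewrite E // size_traject; have := max_card (mem (fconnect g a)).
rewrite /order => H; apply: leq_ltn_trans H _; lia.
Qed.

Lemma lam_comm v p : is_cycle s t v p ->
  lam (path_series K v p) = lam (path_series K (rot1_start t v p) (rot 1 p)).
Proof.
move=> cyc; rewrite /lam; congr (_ + _); last first.
  have hw : forall a, (c (g a))^-1 = (c a)^-1 by move=> a; rewrite cg.
  exact: (ps_rot injg sg (w := fun b => (c b)^-1) hw cyc).
have := ps_rot injf sf (w := fun _ => (1 : K)) (fun _ => erefl) cyc.
by under eq_bigr => a _ do rewrite mul1r; under [in RHS]eq_bigr => a _ do rewrite mul1r.
Qed.

Lemma lam_P a0 : lam (path_series K (s a0) (orbf a0)) = 1.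
Proof.
rewrite /lam [X in _ + X]big1 ?addr0.
  rewrite -[RHS](sum_pick (fun _ => 1) a0); apply: eq_bigr => a _.
  rewrite mulr1 /path_series (orbfE a) (orbfE a0) eqseq_cons.
  by case: (eqVneq a a0) => [->|]; rewrite ?eqxx ?andbF.
move=> b _; rewrite /path_series.
suff -> : (orbg b == orbf a0) = false by rewrite andbF mulr0.
rewrite orbg_cons orbfE; apply/eqP => -[e1 e2 _].
by move: (fneg b); rewrite e2 e1 eqxx.
Qed.
End Main.


Unset Implicit Arguments. Set Strict Implicit.

Theorem proposition4p4 (K : fieldType) (V A : finType) (s t : A -> V)
  (f g : A -> A) (c : A -> K) (Rf Rg Omega : {set A}) :
  quiver_setting s t f g ->
  (forall a, c a != 0) ->
  (forall a, c (g a) = c a) ->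
  orbit_reps f Rf -> orbit_reps g Rg -> orbit_reps g Omega ->
  ((forall a, (4 <= order g a)%N \/ (4 <= order g (f a))%N)
   \/ ((forall a, order g a = 3%N) /\ \prod_(b in Omega) c b != 1)) ->
  ~ rigid s t (W_pot s f g c Rf Rg).
Proof.
move=> [[hV _] [noloop [no2 [deg [[bf bg] [fgset f3]]]]]] cnz cg repf repg _ _ rig.
have injf := bij_inj bf; have injg := bij_inj bg.
have memf a : f a \in [set b | s b == t a] by rewrite -fgset !inE eqxx.
have memg a : g a \in [set b | s b == t a] by rewrite -fgset !inE eqxx orbT.
have sf a : s (f a) = t a by move: (memf a); rewrite inE => /eqP.
have sg a : s (g a) = t a by move: (memg a); rewrite inE => /eqP.
have fneg a : f a != g a.
  apply/negP => /eqP e; have := (deg (t a)).1; rewrite -fgset e setUid cards1.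
  by [].
have [v0 _] : exists v : V, true.
  by move/card_gt0P: hV => [v _]; exists v.
have [a0 _] : exists a : A, true.
  have : (0 < #|[set a | s a == v0]|)%N by rewrite (deg v0).1.
  by move/card_gt0P => [a _]; exists a.
set P := path_series K (s a0) (traject f a0 (order f a0)).
have pot : potential s t P.
  move=> v p; rewrite /P /path_series; case: ifP => [/andP[/eqP -> /eqP ->] _|]; last by rewrite eqxx.
  rewrite /is_cycle (valid_traject sf) (end_traject sf) (iter_order injf) eqxx andbT.
  by rewrite (orb_cons f a0).
have [y [Jy ce]] := rig P pot.
set N := #|A|.+4.
have Lext := @lam_ext K V A s t f g c injf sf noloop f3.
have Lideal := @lam_ideal K V A s t f g c Rf Rg injf injg sf sg fneg noloop no2 f3 cg cnz repf repg.
have Lcomm := @lam_comm K V A s t f g c injf injg sf sg cg.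
have LP := @lam_P K V A s t f g c injf injg sf sg fneg noloop no2 f3 a0.
have ly : lam s f g c y = 0.
  have [y1 [[l hl] agree]] := Jy N.
  rewrite (Lext _ y1) //.
  rewrite (Lext _ (fun v p => \sum_(e <- l) smul s t (smul s t e.1.1 (dcyc s t e.1.2 (W_pot s f g c Rf Rg))) e.2 v p)); last by move=> v p _; rewrite hl.
  rewrite lam_sum; apply: (big_rec (fun x => x = 0)) => // e x _ ->.
  by rewrite Lideal addr0.
have lPy : lam s f g c (fun v p => P v p - y v p) = 0.
  have [x1 [[l [cyc hl]] agree]] := ce N.
  rewrite (Lext _ x1) //.
  rewrite (Lext _ (fun v p => \sum_(e <- l) e.1 * (path_series K e.2.1 e.2.2 v p
              - path_series K (rot1_start t e.2.1 e.2.2) (rot 1 e.2.2) v p))); last by move=> v p _; rewrite hl.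
  rewrite lam_sum big_seq big1 // => e el.
  by rewrite lam_scale lam_sub Lcomm ?subrr ?mulr0 // cyc.
move: lPy; rewrite lam_sub ly subr0 /P LP.
by move/eqP; rewrite oner_eq0.
Qed.
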